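(* Let $n\ge 1$ be an integer and let $\mathbf F_{\mathcal V_n}(1)$ be the free algebra on one generator in the variety $\mathcal V_n$ generated by $\mathbf J_n$. Then $$|F_{\mathcal V_n}(1)|=\tfrac12\big(n^6+10n^5+42n^4+102n^3+157n^2+148n+72\big).$$
   Context: For $n\ge1$, $\mathbf J_n=\langle J_n;\otimes,\oplus,\wedge,\vee,\neg,\top,\mathbf f_0,\dots,\mathbf f_n,\mathbf t_0,\dots,\mathbf t_n,\bot\rangle$ where $J_n=\{\top,\mathbf f_0,\dots,\mathbf f_n,\mathbf t_0,\dots,\mathbf t_n,\bot\}$ ($2n+4$ elements). The knowledge order $\le_k$ on $J_n$ consists of the two chains $\bot<\mathbf f_n<\mathbf f_{n-1}<\dots<\mathbf f_0<\top$ and $\bot<\mathbf t_n<\dots<\mathbf t_0<\top$ (with $\mathbf f_i,\mathbf t_j$ incomparable). The truth order $\le_t$ is generated by $\mathbf f_0<\mathbf f_1<\dots<\mathbf f_n<\top<\mathbf t_n<\dots<\mathbf t_1<\mathbf t_0$ and $\mathbf f_n<\bot<\mathbf t_n$ ($\top,\bot$ incomparable). $\otimes,\oplus$ are meet and join for $\le_k$, $\wedge,\vee$ are meet and join for $\le_t$, $\neg\top=\top$, $\neg\bot=\bot$, $\neg\mathbf f_m=\mathbf t_m$, $\neg\mathbf t_m=\mathbf f_m$, and every element is a nullary operation (constant) naming itself. $\mathcal V_n$ is the variety generated by $\mathbf J_n$. *)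

(* Defs.v *)
From HB Require Import structures.
From mathcomp Require Import all_boot all_order.
Set Implicit Arguments. Unset Strict Implicit. Unset Printing Implicit Defensive.

Inductive jel (n : nat) : Type :=
  | JTop | JBot | JF of 'I_n.+1 | JT of 'I_n.+1.
Arguments JTop {n}. Arguments JBot {n}.

Definition jel_code n (x : jel n) : option (option (bool * 'I_n.+1)) :=
  match x with
  | JTop => None | JBot => Some None
  | JF i => Some (Some (false, i)) | JT i => Some (Some (true, i)) end.
Definition jel_decode n (c : option (option (bool * 'I_n.+1))) : jel n :=
  match c with
  | None => JTop | Some None => JBot
  | Some (Some (false, i)) => JF i | Some (Some (true, i)) => JT i end.
Lemma jel_codeK n : cancel (@jel_code n) (@jel_decode n).
Proof. by case. Qed.
HB.instance Definition _ n := Equality.copy (jel n) (can_type (@jel_codeK n)).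
HB.instance Definition _ n := Choice.copy (jel n) (can_type (@jel_codeK n)).
HB.instance Definition _ n := Countable.copy (jel n) (can_type (@jel_codeK n)).
HB.instance Definition _ n := Finite.copy (jel n) (can_type (@jel_codeK n)).

Section Ops.
Variable n : nat.
Implicit Types x y : jel n.

Definition le_k x y : bool :=
  match x, y with
  | JBot, _ => true
  | _, JTop => true
  | JF i, JF j => (j <= i)%N
  | JT i, JT j => (j <= i)%N
  | _, _ => false
  end.

(* Truth order <=_t : f_0 < ... < f_n < top < t_n < ... < t_0 and
   f_n < bot < t_n (top, bot incomparable). *)
Definition lvl x : nat :=
  match x with
  | JF i => i | JTop => n.+1 | JBot => n.+1 | JT i => (n.*2.+2 - i)%N end.
Definition le_t x y : bool := (x == y) || (lvl x < lvl y)%N.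

(* otimes / oplus : meet / join for <=_k *)
Definition jotimes x y : jel n :=
  match x, y with
  | JTop, _ => y
  | _, JTop => x
  | JF i, JF j => JF (if (i <= j)%N then j else i)
  | JT i, JT j => JT (if (i <= j)%N then j else i)
  | _, _ => JBot
  end.
Definition joplus x y : jel n :=
  match x, y with
  | JBot, _ => y
  | _, JBot => x
  | JF i, JF j => JF (if (i <= j)%N then i else j)
  | JT i, JT j => JT (if (i <= j)%N then i else j)
  | _, _ => JTop
  end.

(* wedge / vee : meet / join for <=_t.  Two distinct elements of the same
   level are exactly top and bot, whose meet is f_n and join is t_n. *)
Definition jwedge x y : jel n :=
  if (lvl x < lvl y)%N then x else if (lvl y < lvl x)%N then y
  else if x == y then x else JF ord_max.
Definition jvee x y : jel n :=
  if (lvl x < lvl y)%N then y else if (lvl y < lvl x)%N then x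
  else if x == y then x else JT ord_max.

Definition jneg x : jel n :=
  match x with JTop => JTop | JBot => JBot | JF i => JT i | JT i => JF i end.

Inductive term : Type :=
  | TVar
  | TConst of jel n
  | TOtimes of term & term
  | TOplus of term & term
  | TWedge of term & term
  | TVee of term & term
  | TNeg of term.

Fixpoint teval (t : term) (a : jel n) : jel n :=
  match t with
  | TVar => a
  | TConst c => c
  | TOtimes t1 t2 => jotimes (teval t1 a) (teval t2 a)
  | TOplus t1 t2 => joplus (teval t1 a) (teval t2 a)
  | TWedge t1 t2 => jwedge (teval t1 a) (teval t2 a)
  | TVee t1 t2 => jvee (teval t1 a) (teval t2 a)
  | TNeg t1 => jneg (teval t1 a)
  end.

(* The universe of the free algebra F_{V_n}(1), realised (Birkhoff) as the
   set of unary term operations of J_n. *)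
Definition free1 (f : {ffun jel n -> jel n}) : Prop :=
  exists t : term, forall a, teval t a = f a.

End Ops.

(* Main.v *)
Require Import Defs.
From mathcomp Require Import all_boot all_order.
From mathcomp Require Import zify.
Set Implicit Arguments. Unset Strict Implicit. Unset Printing Implicit Defensive.

Section S.
Variable n : nat.
Implicit Types x y : jel n.

Inductive kd := KB | KF | KTt | KT.
Definition kind x := match x with JTop => KT | JBot => KB | JF _ => KF | JT _ => KTt end.
Definition kle (a b : kd) : bool :=
  match a, b with KB, _ => true | _, KT => true | KF, KF => true | KTt, KTt => true | _, _ => false end.
Definition Kr x y := kle (kind x) (kind y).

Definition Rint (i j : nat) x y : bool :=
  match x, y with
  | JTop, JTop => true | JBot, JBot => true
  | JF a, JF b => (val a == val b) || [&& i <= a, a < b & b <= j]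
  | JT a, JT b => (val a == val b) || [&& i <= a, a < b & b <= j]
  | _, _ => false end.

Lemma eqJF (a b : 'I_n.+1) : (JF a == JF b :> jel n) = (val a == val b).
Proof. by []. Qed.
Lemma eqJT (a b : 'I_n.+1) : (JT a == JT b :> jel n) = (val a == val b).
Proof. by []. Qed.

Ltac brute := repeat match goal with o : ordinal _ |- _ => case: o => o ? end; move=> ? ?; simpl in *;
  rewrite /jwedge /jvee /=;
  repeat (rewrite ?eqJF ?eqJT /=; match goal with |- context[if ?c then _ else _] => lazymatch c with context[if _ then _ else _] => fail | _ => let E := fresh "E" in case E: c end end);
  simpl in *; try lia.

Ltac c4 := case=> [||a|a]; case=> [||a'|a']; case=> [||b|b]; case=> [||b'|b'] //=; brute.

Definition compat (R : jel n -> jel n -> bool) :=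
  (forall x, R x x) /\
      (forall x x' y y', R x x' -> R y y' -> R (jotimes x y) (jotimes x' y')) /\
      (forall x x' y y', R x x' -> R y y' -> R (joplus x y) (joplus x' y')) /\
      (forall x x' y y', R x x' -> R y y' -> R (jwedge x y) (jwedge x' y')) /\
      (forall x x' y y', R x x' -> R y y' -> R (jvee x y) (jvee x' y')) /\
      (forall x x', R x x' -> R (jneg x) (jneg x')).

Lemma compat_teval R : compat R -> forall t a b, R a b -> R (teval t a) (teval t b).
Proof.
case=> Rr [Ro [Rp [Rw [Rv Rn]]]]; elim=> [|c|t1 I1 t2 I2|t1 I1 t2 I2|t1 I1 t2 I2|t1 I1 t2 I2|t1 I1] a b ab /=; auto.
Qed.

Lemma compat_Rint k : compat (Rint k k.+1).
Proof.
split; [|split; [|split; [|split; [|split]]]].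
- by case=> //= a; rewrite eqxx.
- c4.
- c4.
- c4.
- c4.
- by case=> [||a|a]; case=> [||a'|a'].
Qed.

Lemma compat_Kr : compat Kr.
Proof.
split; [|split; [|split; [|split; [|split]]]].
- by case.
- rewrite /Kr; c4.
- rewrite /Kr; c4.
- rewrite /Kr; c4.
- rewrite /Kr; c4.
- by case=> [||a|a]; case=> [||a'|a'].
Qed.

Lemma Rint_trans i j x y z : i <= j -> Rint i j x y -> Rint j j.+1 y z -> Rint i j.+1 x z.
Proof.
move=> ij; case: x => [||a|a]; case: y => [||b|b]; case: z => [||c|c] //=;
repeat match goal with o : ordinal _ |- _ => case: o => o ? end; simpl in *; lia.
Qed.


Lemma Rint_refl i j x : Rint i j x x.
Proof. by case: x => //= a; rewrite eqxx. Qed.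

Definition Cf (f : jel n -> jel n) :=
  (forall k, k < n -> Rint k k.+1 (f (JF (inord k))) (f (JF (inord k.+1)))
                   && Rint k k.+1 (f (JT (inord k))) (f (JT (inord k.+1)))) /\
  (forall x, Kr (f JBot) (f x) && Kr (f x) (f JTop)).

Lemma free1_C (f : {ffun jel n -> jel n}) : free1 f -> Cf f.
Proof.
case=> t Ht; split.
- move=> k kn; rewrite -!Ht; apply/andP; split; apply: (compat_teval (compat_Rint k));
  rewrite /= !inordK; lia.
- move=> x; rewrite -!Ht; apply/andP; split; apply: (compat_teval compat_Kr); by case: x.
Qed.

Lemma chain (g : nat -> jel n) : (forall k, k < n -> Rint k k.+1 (g k) (g k.+1)) ->
  forall i j, i <= j -> j <= n -> Rint i j (g i) (g j).
Proof.
move=> H i; elim=> [|j IH] ij jn.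
- have -> : i = 0 by lia.
  exact: Rint_refl.
- case: (eqVneq i j.+1) => [->|ne]; first exact: Rint_refl.
  apply: Rint_trans; [lia| apply: IH; lia| apply: H; lia].
Qed.

Ltac ebrute := repeat match goal with o : ordinal _ |- _ => destruct o as [o ?] end; simpl in *;
  rewrite /jwedge /jvee /=;
  repeat (rewrite ?eqJF ?eqJT /=; match goal with |- context[if ?c then _ else _] => lazymatch c with context[if _ then _ else _] => fail | _ => let E := fresh "E" in case E: c end end);
  simpl in *; try reflexivity; try (exfalso; lia);
  try (congr JF; apply: val_inj; simpl; lia); try (congr JT; apply: val_inj; simpl; lia).

Definition maj x y z := jvee (jwedge x y) (jvee (jwedge y z) (jwedge x z)).
Lemma maj1 x y : maj x x y = x. Proof. rewrite /maj; case: x => [||a|a]; case: y => [||b|b]; ebrute. Qed.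
Lemma maj2 x y : maj x y x = x. Proof. rewrite /maj; case: x => [||a|a]; case: y => [||b|b]; ebrute. Qed.
Lemma maj3 x y : maj y x x = x. Proof. rewrite /maj; case: x => [||a|a]; case: y => [||b|b]; ebrute. Qed.

End S.

Section T.
Variable n : nat.
Implicit Types x y : jel n.

Ltac ebrute2 := repeat match goal with o : ordinal _ |- _ => destruct o as [o ?] end; simpl in *;
  rewrite /jwedge /jvee /=;
  repeat (rewrite ?eqJF ?eqJT /=; match goal with |- context[if ?c then _ else _] => lazymatch c with context[if _ then _ else _] => fail | _ => let E := fresh "E" in case E: c end end);
  simpl in *; try reflexivity; try (exfalso; lia);
  try (congr JF; apply: val_inj; simpl; lia); try (congr JT; apply: val_inj; simpl; lia).

Fixpoint tsubst (t s : term n) : term n :=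
  match t with
  | TVar => s
  | TConst c => TConst c
  | TOtimes a b => TOtimes (tsubst a s) (tsubst b s)
  | TOplus a b => TOplus (tsubst a s) (tsubst b s)
  | TWedge a b => TWedge (tsubst a s) (tsubst b s)
  | TVee a b => TVee (tsubst a s) (tsubst b s)
  | TNeg a => TNeg (tsubst a s)
  end.

Lemma teval_subst t s a : teval (tsubst t s) a = teval t (teval s a).
Proof. by elim: t => //= [t1 -> t2 ->|t1 -> t2 ->|t1 -> t2 ->|t1 -> t2 ->|t1 ->]. Qed.

Definition interp (f : jel n -> jel n) a b := exists t : term n, teval t a = f a /\ teval t b = f b.

Lemma interp_sym f a b : interp f a b -> interp f b a.
Proof. by case=> t [h1 h2]; exists t. Qed.

Lemma interp_refl f a : interp f a a.
Proof. by exists (TConst (f a)). Qed.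

Lemma LFF (c d : 'I_n.+1) : exists t : term n, teval t JBot = JF c /\ teval t JTop = JF d.
Proof.
case: (leqP c d) => cd.
- exists (TWedge (TOplus (TVar n) (TConst (JF c))) (TConst (JF d))); split; ebrute2.
- exists (TOplus (TOtimes (TVar n) (TConst (JF d))) (TConst (JF c))); split; ebrute2.
Qed.

Lemma L_BT u v : Kr u v -> exists t : term n, teval t JBot = u /\ teval t JTop = v.
Proof.
rewrite /Kr; case: u => [||c|c]; case: v => [||d|d] //= _.
- by exists (TConst JTop).
- by exists (TVar n).
- by exists (TConst JBot).
- by exists (TOtimes (TVar n) (TConst (JF d))).
- by exists (TOtimes (TVar n) (TConst (JT d))).
- by exists (TOplus (TVar n) (TConst (JF c))).
- exact: LFF.
- by exists (TOplus (TVar n) (TConst (JT c))).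
- have [t [h1 h2]] := LFF c d; exists (TNeg t); by rewrite /= h1 h2.
Qed.

Definition chainel x := match x with JF _ | JT _ => true | _ => false end.

Lemma interp_B f x : chainel x -> Kr (f JBot) (f x) -> interp f JBot x.
Proof.
move=> cx /L_BT [h [h1 h2]].
exists (tsubst h (TOplus (TVar n) (TNeg (TVar n)))); rewrite !teval_subst /= h1; split => //.
by case: x cx h2 => //= a _ ->.
Qed.

Lemma interp_T f x : chainel x -> Kr (f x) (f JTop) -> interp f JTop x.
Proof.
move=> cx /L_BT [h [h1 h2]].
exists (tsubst h (TOtimes (TVar n) (TNeg (TVar n)))); rewrite !teval_subst /= h2; split => //.
by case: x cx h1 => //= a _ ->.
Qed.

Lemma joplusB x : joplus x JBot = x. Proof. by case: x. Qed.
Lemma jotimesB x : jotimes JBot x = JBot. Proof. by case: x. Qed.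

Lemma interp_FT f (i j : 'I_n.+1) : interp f (JF i) (JT j).
Proof.
pose s := TOplus (TVar n) (TConst (JT (@ord0 n))).
pose p := TOtimes s (TNeg s).
pose q := tsubst p (TNeg (TVar n)).
exists (TOplus (TOtimes p (TConst (f (JF i)))) (TOtimes q (TConst (f (JT j))))).
by rewrite /=; split; case: (f (JF i)); case: (f (JT j)).
Qed.

Definition cl (c d : 'I_n.+1) : term n := TOplus (TOtimes (TVar n) (TConst (JF c))) (TConst (JF d)).

Lemma interp_Rint (a b : jel n) (pre : term n) (i j : 'I_n.+1) u v :
  teval pre a = JF i -> teval pre b = JF j -> Rint i j u v ->
  exists t : term n, teval t a = u /\ teval t b = v.
Proof.
move=> ha hb; case: u => [||c|c]; case: v => [||d|d] //=.
- by move=> _; exists (TConst JTop).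
- by move=> _; exists (TConst JBot).
- case/orP.
  + move=> /eqP /val_inj ->; by exists (TConst (JF d)); split.
  + move=> H; exists (tsubst (cl c d) pre); rewrite !teval_subst ha hb; split; ebrute2.
- case/orP.
  + move=> /eqP /val_inj ->; by exists (TConst (JT d)); split.
  + move=> H; exists (TNeg (tsubst (cl c d) pre)).
    have tn t x : teval (TNeg t) x = jneg (teval t x) by [].
    rewrite !tn !teval_subst ha hb; split; ebrute2.
Qed.


Lemma interp_chain f (i0 j0 : 'I_n.+1) : Cf f -> i0 < j0 ->
  interp f (JF i0) (JF j0) /\ interp f (JT i0) (JT j0).
Proof.
move=> [H _] ij.
have R1 : Rint i0 j0 (f (JF i0)) (f (JF j0)).
  have := @chain n (fun k => f (JF (inord k))) _ i0 j0.
  rewrite !inord_val; apply; first (by move=> k kn; case/andP: (H k kn)); [lia | have := ltn_ord j0; lia].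
have R2 : Rint i0 j0 (f (JT i0)) (f (JT j0)).
  have := @chain n (fun k => f (JT (inord k))) _ i0 j0.
  rewrite !inord_val; apply; first (by move=> k kn; case/andP: (H k kn)); [lia | have := ltn_ord j0; lia].
split.
- exact: (@interp_Rint _ _ (TVar n) i0 j0 _ _ erefl erefl R1).
- exact: (@interp_Rint (JT i0) (JT j0) (TNeg (TVar n)) i0 j0 _ _ erefl erefl R2).
Qed.

Lemma interp_all f : Cf f -> forall a b, interp f a b.
Proof.
move=> Cff; have [_ HK] := Cff.
have BT : Kr (f JBot) (f JTop) by case/andP: (HK JTop).
have KB x : Kr (f JBot) (f x) by case/andP: (HK x).
have KT x : Kr (f x) (f JTop) by case/andP: (HK x).
case=> [||i|i]; case=> [||j|j]; try exact: interp_refl.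
- by apply: interp_sym; exact: L_BT BT.
- exact: interp_T.
- exact: interp_T.
- exact: L_BT BT.
- exact: interp_B.
- exact: interp_B.
- by apply: interp_sym; apply: interp_T.
- by apply: interp_sym; apply: interp_B.
- case: (ltngtP i j) => ij.
  + exact: (interp_chain Cff ij).1.
  + by apply: interp_sym; exact: (interp_chain Cff ij).1.
  + have -> : i = j by apply: val_inj.
    exact: interp_refl.
- exact: interp_FT.
- by apply: interp_sym; apply: interp_T.
- by apply: interp_sym; apply: interp_B.
- by apply: interp_sym; apply: interp_FT.
- case: (ltngtP i j) => ij.
  + exact: (interp_chain Cff ij).2.
  + by apply: interp_sym; exact: (interp_chain Cff ij).2.
  + have -> : i = j by apply: val_inj.
    exact: interp_refl.
Qed.

Definition tmaj (t1 t2 t3 : term n) :=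
  TVee (TWedge t1 t2) (TVee (TWedge t2 t3) (TWedge t1 t3)).

Lemma BP f : (forall a b, interp f a b) ->
  forall A : seq (jel n), exists t : term n, forall a, a \in A -> teval t a = f a.
Proof.
move=> Hab A; move: {2}(size A) (leqnn (size A)) => m; elim: m A => [|m IH] A.
  by case: A => // _; exists (TVar n).
case: A => [|a [|b [|c r]]] /= sz.
- by exists (TVar n).
- have [t [h1 _]] := Hab a a; exists t => x; rewrite inE => /eqP ->.
  exact: h1.
- have [t [h1 h2]] := Hab a b; exists t => x; rewrite !inE => /orP [] /eqP ->; [exact: h1 | exact: h2].
- have [t1 H1] := IH [:: b, c & r] ltac:(simpl; lia).
  have [t2 H2] := IH [:: a, c & r] ltac:(simpl; lia).
  have [t3 H3] := IH [:: a, b & r] ltac:(simpl; lia).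
  exists (tmaj t1 t2 t3) => x; rewrite !inE => Hx.
  have E : teval (tmaj t1 t2 t3) x = maj (teval t1 x) (teval t2 x) (teval t3 x) by [].
  rewrite E.
  case/or4P: Hx => [/eqP ->|/eqP ->|/eqP ->|xr].
  + by rewrite (H2 a) ?inE ?eqxx // (H3 a) ?inE ?eqxx // maj3.
  + by rewrite (H1 b) ?inE ?eqxx // (H3 b) ?inE ?eqxx ?orbT // maj2.
  + by rewrite (H1 c) ?inE ?eqxx ?orbT // (H2 c) ?inE ?eqxx ?orbT // maj1.
  + by rewrite (H1 x) ?inE ?xr ?orbT // (H2 x) ?inE ?xr ?orbT // (H3 x) ?inE ?xr ?orbT // maj1.
Qed.

Lemma C_free1 (f : {ffun jel n -> jel n}) : Cf f -> free1 f.
Proof.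
move=> Cff; have [t Ht] := BP (interp_all Cff) (enum [pred x : jel n | true]).
by exists t => a; apply: Ht; rewrite mem_enum.
Qed.

End T.

Section U.
Variable n : nat.
Implicit Types x y : jel n.

Definition clampi (i a b : 'I_n.+1) : 'I_n.+1 := inord (minn (maxn i a) b).
Lemma clampiE i a b : nat_of_ord (clampi i a b) = minn (maxn i a) b.
Proof. rewrite /clampi inordK //; have := ltn_ord b; lia. Qed.

Definition chainval x y (i : 'I_n.+1) : jel n :=
  match x, y with
  | JF a, JF b => JF (clampi i a b)
  | JT a, JT b => JT (clampi i a b)
  | _, _ => x end.

Ltac obrute := repeat match goal with o : ordinal _ |- _ => have := ltn_ord o; move: o => o end.

Lemma chainval_eq x y z (i : 'I_n.+1) : Rint 0 i x z -> Rint i n z y -> z = chainval x y i.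
Proof.
case: x => [||a|a]; case: y => [||b|b]; case: z => [||c|c] //= H1 H2; try done;
  f_equal; apply: val_inj => /=; rewrite clampiE;
  have := ltn_ord a; have := ltn_ord b; have := ltn_ord c; have := ltn_ord i; lia.
Qed.

Lemma chainval_ends x y : Rint 0 n x y -> chainval x y ord0 = x /\ chainval x y ord_max = y.
Proof.
case: x => [||a|a]; case: y => [||b|b] //= H; split; try done; f_equal; apply: val_inj => /=; rewrite clampiE /=;
  have := ltn_ord a; have := ltn_ord b; lia.
Qed.

Lemma chainval_adj x y k : k < n -> Rint 0 n x y ->
  Rint k k.+1 (chainval x y (inord k)) (chainval x y (inord k.+1)).
Proof.
move=> kn; case: x => [||a|a]; case: y => [||b|b] //= H; rewrite ?eqxx //= !clampiE !inordK;
  have := ltn_ord a; have := ltn_ord b; lia.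
Qed.

Lemma kind_chainval x y i : kind (chainval x y i) = kind x.
Proof. by case: x; case: y. Qed.

Lemma Kr_refl x : Kr x x. Proof. by case: x. Qed.
Lemma Kr_trans x y z : Kr x y -> Kr y z -> Kr x z.
Proof. by rewrite /Kr; case: x; case: y; case: z. Qed.

Definition W := ((jel n * jel n) * ((jel n * jel n) * (jel n * jel n)))%type.

Definition build (w : W) : {ffun jel n -> jel n} :=
  let: ((u, v), ((p0, pn), (q0, qn))) := w in
  [ffun x => match x with JTop => v | JBot => u | JF i => chainval p0 pn i | JT i => chainval q0 qn i end].

Definition extract (f : jel n -> jel n) : W :=
  ((f JBot, f JTop), ((f (JF ord0), f (JF ord_max)), (f (JT ord0), f (JT ord_max)))).

Definition validb (w : W) : bool :=
  let: ((u, v), ((p0, pn), (q0, qn))) := w in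
  [&& Kr u p0, Kr p0 v, Rint 0 n p0 pn, Kr u q0, Kr q0 v & Rint 0 n q0 qn].

Lemma chainF (f : jel n -> jel n) : Cf f -> forall i j : 'I_n.+1, i <= j ->
  Rint i j (f (JF i)) (f (JF j)) /\ Rint i j (f (JT i)) (f (JT j)).
Proof.
move=> [H _] i j ij; split.
- have := @chain n (fun k => f (JF (inord k))) _ i j.
  rewrite !inord_val; apply; first (by move=> k kn; case/andP: (H k kn)); [lia | have := ltn_ord j; lia].
- have := @chain n (fun k => f (JT (inord k))) _ i j.
  rewrite !inord_val; apply; first (by move=> k kn; case/andP: (H k kn)); [lia | have := ltn_ord j; lia].
Qed.

Lemma extract_valid (f : {ffun jel n -> jel n}) : Cf f -> validb (extract f) /\ build (extract f) = f.
Proof.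
move=> Cff; have [_ HK] := Cff.
have KB x : Kr (f JBot) (f x) by case/andP: (HK x).
have KT x : Kr (f x) (f JTop) by case/andP: (HK x).
have [R1 R2] := @chainF f Cff ord0 ord_max (leq0n _).
split.
- by rewrite /= KB KT R1 KB KT R2.
- apply/ffunP => x; rewrite ffunE; case: x => [||i|i] //.
  + have [A1 _] := @chainF f Cff ord0 i (leq0n _).
    have [A2 _] := @chainF f Cff i ord_max (leq_ord i).
    by rewrite -(chainval_eq A1 A2).
  + have [_ A1] := @chainF f Cff ord0 i (leq0n _).
    have [_ A2] := @chainF f Cff i ord_max (leq_ord i).
    by rewrite -(chainval_eq A1 A2).
Qed.

Lemma build_extract w : validb w -> extract (build w) = w.
Proof.
case: w => [[u v] [[p0 pn] [q0 qn]]] /and5P [_ _ R1 _ /andP [_ R2]].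
rewrite /extract /build !ffunE.
by have [-> ->] := chainval_ends R1; have [-> ->] := chainval_ends R2.
Qed.

Lemma build_C w : validb w -> Cf (build w).
Proof.
case: w => [[u v] [[p0 pn] [q0 qn]]] /and5P [K1 K2 R1 K3 /andP [K4 R2]]; split.
- by move=> k kn; rewrite !ffunE !chainval_adj.
- have uv := Kr_trans K1 K2.
  case=> [||i|i]; rewrite !ffunE ?Kr_refl ?uv //.
  + by rewrite /Kr !kind_chainval; apply/andP.
  + by rewrite /Kr !kind_chainval; apply/andP.
Qed.

End U.

Lemma sum_ge N a : \sum_(j < N) (a <= j : nat) = N - a.
Proof.
elim: N => [|N IH]; first by rewrite big_ord0.
by rewrite big_ord_recr /= IH; case: leqP => /= h; lia.
Qed.

Lemma sum_tri N : 2 * \sum_(i < N) (N - i) = N * N.+1.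
Proof.
elim: N => [|N IH]; first by rewrite big_ord0.
rewrite big_ord_recl /=.
rewrite (eq_bigr (fun i : 'I_N => N - i)); last by move=> i _; rewrite /bump /=; lia.
rewrite mulnDr IH; lia.
Qed.

Section V.
Variable n : nat.

Definition E : seq (jel n) :=
  [:: JTop, JBot & [seq JF i | i <- index_enum 'I_n.+1] ++ [seq JT i | i <- index_enum 'I_n.+1]].

Lemma mem_E x : x \in E.
Proof.
case: x => [||i|i]; rewrite /E !inE ?mem_cat //; apply/orP; right; apply/orP; right; apply/orP;
  [left|right]; apply: map_f; exact: mem_index_enum.
Qed.

Lemma uniq_E : uniq E.
Proof.
rewrite /E /= !inE !mem_cat cat_uniq !map_inj_uniq ?index_enum_uniq //; last by move=> a b [].
  2: by move=> a b [].
apply/and5P; split => //.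
- by apply/negP; case/or3P => [//| /mapP [? _ //] | /mapP [? _ //]].
- by apply/negP; case/orP => /mapP [? _ //].
- by apply/hasPn => x /mapP [i _ ->]; apply/negP => /mapP [j _ //].
Qed.

Lemma sumE (F : jel n -> nat) : \sum_(x <- E) F x =
  F JTop + F JBot + \sum_(i < n.+1) F (JF i) + \sum_(i < n.+1) F (JT i).
Proof. by rewrite /E !big_cons big_cat !big_map /= !addnA. Qed.

Lemma sumEk (G : kd -> nat) : \sum_(x <- E) G (kind x) =
  G KT + G KB + n.+1 * G KF + n.+1 * G KTt.
Proof. by rewrite sumE /= !sum_nat_const card_ord. Qed.


Definition m := \sum_(i < n.+1) (n.+1 - i).

Definition cnt (x : jel n) := \sum_(y <- E) (Rint 0 n x y : nat).

Lemma cntE x : cnt x = match x with JTop | JBot => 1 | JF i | JT i => n.+1 - i end.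
Proof.
rewrite /cnt sumE; case: x => [||i|i].
- by rewrite !big1.
- by rewrite !big1.
- have h1 : \sum_(j < n.+1) (Rint 0 n (JF i) (JT j) : nat) = 0 by rewrite big1.
  have h2 : \sum_(j < n.+1) (Rint 0 n (JF i) (JF j) : nat) = n.+1 - i.
    rewrite (eq_bigr (fun j : 'I_n.+1 => (i <= j : nat))) ?sum_ge //.
    by move=> j _ /=; have := ltn_ord j; have := ltn_ord i; case: leqP => /= h; case: eqP => /=; lia.
  by rewrite h1 h2 /= add0n addn0.
- have h1 : \sum_(j < n.+1) (Rint 0 n (JT i) (JF j) : nat) = 0 by rewrite big1.
  have h2 : \sum_(j < n.+1) (Rint 0 n (JT i) (JT j) : nat) = n.+1 - i.
    rewrite (eq_bigr (fun j : 'I_n.+1 => (i <= j : nat))) ?sum_ge //.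
    by move=> j _ /=; have := ltn_ord j; have := ltn_ord i; case: leqP => /= h; case: eqP => /=; lia.
  by rewrite h1 h2 /= add0n.
Qed.

Definition Dk (k1 k2 : kd) : nat :=
  (kle k1 KT && kle KT k2) + (kle k1 KB && kle KB k2) +
  (kle k1 KF && kle KF k2) * m + (kle k1 KTt && kle KTt k2) * m.

Definition Vp (u v : jel n) (p : jel n * jel n) : bool := [&& Kr u p.1, Kr p.1 v & Rint 0 n p.1 p.2].

Definition PP := [seq (x, y) | x <- E, y <- E].

Lemma DE u v : \sum_(p <- PP) (Vp u v p : nat) = Dk (kind u) (kind v).
Proof.
rewrite big_allpairs.
rewrite (eq_bigr (fun x => (Kr u x && Kr x v) * cnt x)); last first.
  move=> x _; rewrite /cnt big_distrr /=; apply: eq_bigr => y _.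
  by rewrite /Vp /= andbA -mulnb.
rewrite sumE.
have s1 : \sum_(i < n.+1) (Kr u (JF i) && Kr (JF i) v) * cnt (JF i) = (kle (kind u) KF && kle KF (kind v)) * m.
  by rewrite /m big_distrr; apply: eq_bigr => i _; rewrite cntE.
have s2 : \sum_(i < n.+1) (Kr u (JT i) && Kr (JT i) v) * cnt (JT i) = (kle (kind u) KTt && kle KTt (kind v)) * m.
  by rewrite /m big_distrr; apply: eq_bigr => i _; rewrite cntE.
by rewrite s1 s2 !cntE /Dk /Kr /= !muln1.
Qed.


Definition allW : seq (W n) := [seq (uv, pq) | uv <- PP, pq <- [seq (p, q) | p <- PP, q <- PP]].
Definition L := [seq w <- allW | validb w].

Lemma count_sum (T : Type) (p : pred T) s : count p s = \sum_(x <- s) (p x : nat).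
Proof. by elim: s => [|x s IH]; rewrite ?big_nil ?big_cons //= IH. Qed.

Lemma mem_PP p : p \in PP.
Proof. by case: p => x y; apply/allpairsP; exists (x, y); rewrite !mem_E. Qed.

Lemma mem_allW w : w \in allW.
Proof.
case: w => uv [p q]; apply/allpairsP; exists (uv, (p, q)); rewrite mem_PP; split => //.
by apply/allpairsP; exists (p, q); rewrite !mem_PP.
Qed.

Lemma uniq_PP : uniq PP.
Proof. by apply: allpairs_uniq; [exact: uniq_E | exact: uniq_E | move=> [? ?] [? ?]]. Qed.

Lemma uniq_allW : uniq allW.
Proof.
apply: allpairs_uniq; [exact: uniq_PP | | by move=> [? ?] [? ?]].
by apply: allpairs_uniq; [exact: uniq_PP | exact: uniq_PP | move=> [? ?] [? ?]].
Qed.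

Lemma sizeL : size L = \sum_(u <- E) \sum_(v <- E) Dk (kind u) (kind v) * Dk (kind u) (kind v).
Proof.
rewrite size_filter count_sum big_allpairs big_allpairs.
apply: eq_bigr => u _; apply: eq_bigr => v _.
rewrite big_allpairs -!DE big_distrlr /=.
apply: eq_bigr => p _; apply: eq_bigr => q _.
case: p q => [p0 pn] [q0 qn]; by rewrite /validb /Vp /= mulnb -!andbA.
Qed.

Lemma sizeL2 : 2 * size L = n ^ 6 + 10 * n ^ 5 + 42 * n ^ 4 + 102 * n ^ 3
                      + 157 * n ^ 2 + 148 * n + 72.
Proof.
rewrite sizeL.
rewrite (eq_bigr (fun u => let k := kind u in
   Dk k KT * Dk k KT + Dk k KB * Dk k KB + n.+1 * (Dk k KF * Dk k KF) + n.+1 * (Dk k KTt * Dk k KTt))); last first.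
  by move=> u _; rewrite (sumEk (fun k => Dk (kind u) k * Dk (kind u) k)).
rewrite (sumEk (fun k => Dk k KT * Dk k KT + Dk k KB * Dk k KB + n.+1 * (Dk k KF * Dk k KF) + n.+1 * (Dk k KTt * Dk k KTt))).
rewrite /Dk /=.
have hm : 2 * m = n.+1 * n.+2 by rewrite /m sum_tri.
have [a [En|En]] : exists a, n = a.*2 \/ n = a.*2.+1.
  exists n./2; have := odd_double_half n; case: (odd n) => /= h; [right|left]; lia.
- have Em : m = (2 * a + 1) * (a + 1) by move: hm; rewrite En; nia.
  rewrite Em En; rewrite -!mul2n; nia.
- have Em : m = (a + 1) * (2 * a + 3) by move: hm; rewrite En; nia.
  rewrite Em En; rewrite -!mul2n; nia.
Qed.

End V.

Unset Implicit Arguments. Set Strict Implicit.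

Theorem theorem6p3 (n : nat) : (1 <= n)%N ->
  exists s : seq {ffun jel n -> jel n},
    [/\ uniq s,
        (forall f, f \in s <-> free1 f) &
        (2 * size s = n ^ 6 + 10 * n ^ 5 + 42 * n ^ 4 + 102 * n ^ 3
                      + 157 * n ^ 2 + 148 * n + 72)%N].
Proof.
move=> _; exists (map (@build n) (L n)); split.
- rewrite map_inj_in_uniq; first by rewrite filter_uniq // uniq_allW.
  move=> w1 w2; rewrite !mem_filter => /andP [v1 _] /andP [v2 _] e.
  by rewrite -(build_extract v1) e build_extract.
- move=> f; split.
  + case/mapP => w; rewrite mem_filter => /andP [vw _] ->; exact: C_free1 (build_C vw).
  + move=> /free1_C Cff; have [v e] := extract_valid Cff.
    by apply/mapP; exists (extract f) => //; rewrite mem_filter v mem_allW.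
- by rewrite size_map sizeL2.
Qed.
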